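(* Let $d\ge3$, $h\ge1$, $1\le n\le h$, and let $j$ be a vertex at distance $n$ from the root. Then the order of the image of $\bar{\mathbf{x}}_j$ in the quotient group $G(d,h)/G_{n-1}(d,h)$ is $\theta(d,h+2-n)$, where $\theta(d,m):=\frac{(d-1)^m-1}{d-2}$.
   Context: Let $\mathcal{T}(d,h)$ be the rooted tree in which the root $0$ has $d$ children, every vertex at distance $1,\dots,h-1$ from the root has $d-1$ children, and the vertices at distance $h$ are leaves. Let $V$ be its vertex set, $A$ its adjacency matrix, $\Delta := dI-A$, and $\Lambda\subset\mathbb{Z}^V$ the lattice spanned by the rows of $\Delta$. Then $G(d,h):=\mathbb{Z}^V/\Lambda$; $\{\mathbf{x}_i:i\in V\}$ is the standard basis of $\mathbb{Z}^V$ and $\bar{\mathbf{v}}$ denotes the image of $\mathbf{v}$ in $G(d,h)$. For $0\le m\le h$, $G_m(d,h)$ is the subgroup of $G(d,h)$ generated by $\{\bar{\mathbf{x}}_i : i \text{ at distance}\le m\text{ from the root}\}$. *)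

(* Defs.v *)
From mathcomp Require Import all_boot all_order all_algebra.
Set Implicit Arguments. Unset Strict Implicit. Unset Printing Implicit Defensive.
Import GRing.Theory Num.Theory.
Local Open Scope ring_scope.

(* Vertices of T(d,h): a vertex at distance k from the root 0 = [::] is the
   sequence [:: c_1; ...; c_k] of child indices along the path from the root,
   with c_1 < d and c_i < d-1 for i >= 2. *)
Definition nchildren (d : nat) (u : seq nat) : nat :=
  if u is [::] then d else d.-1.

Fixpoint level (d k : nat) : seq (seq nat) :=
  if k is k'.+1 then
    flatten [seq [seq rcons u c | c <- iota 0 (nchildren d u)] | u <- level d k']
  else [:: [::]].

Definition verts (d h : nat) : seq (seq nat) :=
  flatten [seq level d k | k <- iota 0 h.+1].

Definition depth (u : seq nat) : nat := size u.

Definition adj (u w : seq nat) : bool :=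
  ((size w == (size u).+1) && (take (size u) w == u)) ||
  ((size u == (size w).+1) && (take (size w) u == w)).

Definition Delta (d : nat) (i w : seq nat) : int :=
  (d%:Z * (i == w)%:Z - (adj i w)%:Z)%R.

(* Elements of Z^V are represented as functions seq nat -> int, only their
   values on V matter.  [inLm d h m v] : v lies in Lambda + span_Z {x_i : depth i <= m},
   i.e. the image of v in G(d,h) lies in G_m(d,h). *)
Definition inLm (d h m : nat) (v : seq nat -> int) : Prop :=
  exists (c e : seq nat -> int),
    forall w, w \in verts d h ->
      v w = \sum_(i <- verts d h) c i * Delta d i w
            + \sum_(i <- verts d h | (depth i <= m)%N) e i * (i == w)%:Z.

Definition xscaled (k : nat) (j : seq nat) : seq nat -> int :=
  fun w => (k%:Z * (w == j)%:Z)%R.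

Definition quot_order (d h n : nat) (j : seq nat) (k : nat) : Prop :=
  (0 < k)%N /\ inLm d h n.-1 (xscaled k j) /\
  (forall k', (0 < k' < k)%N -> ~ inLm d h n.-1 (xscaled k' j)).

(* theta(d,m) = ((d-1)^m - 1)/(d-2), an exact division for d >= 3 *)
Definition theta (d m : nat) : nat := (((d.-1) ^ m).-1 %/ (d - 2))%N.

(* Main.v *)
Require Import Defs.
From mathcomp Require Import all_boot all_order all_algebra.
From mathcomp Require Import zify ring.
Set Implicit Arguments. Unset Strict Implicit. Unset Printing Implicit Defensive.
Import GRing.Theory Num.Theory.

Local Close Scope ring_scope.


Definition okv (d : nat) (w : seq nat) : bool :=
  if w is c :: t then (c < d) && all (fun x => x < d.-1) t else true.

Lemma okv_rcons d u c : okv d (rcons u c) = okv d u && (c < nchildren d u).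
Proof.
case: u => [|a t] /=; first by rewrite andbT.
by rewrite all_rcons; case: (a < d); case: (c < d.-1); case: (all _ t).
Qed.

Lemma mem_level d k w : (w \in level d k) = (size w == k) && okv d w.
Proof.
elim: k w => [|k IH] w /=.
  by rewrite inE; case: w.
apply/flatten_mapP/idP.
  case=> u; rewrite IH => /andP[/eqP su ou] /mapP[c]; rewrite mem_iota add0n => /andP[_ hc] ->.
  by rewrite size_rcons su eqxx okv_rcons ou hc.
case/lastP: w => [|u c]; first by [].
rewrite size_rcons eqSS okv_rcons => /andP[su /andP[ou hc]].
exists u; first by rewrite IH su ou.
by apply/mapP; exists c => //; rewrite mem_iota add0n.
Qed.

Lemma mem_verts d h w : (w \in verts d h) = (size w <= h) && okv d w.
Proof.
apply/flatten_mapP/idP.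
  by case=> k; rewrite mem_iota add0n mem_level => /andP[_ hk] /andP[/eqP -> ->]; rewrite andbT -ltnS.
case/andP=> sw ow; exists (size w); first by rewrite mem_iota add0n ltnS.
by rewrite mem_level eqxx.
Qed.

Lemma uniq_flatten_map (S T : eqType) (F : S -> seq T) (s : seq S) :
  uniq s -> (forall x, uniq (F x)) ->
  (forall x y z, z \in F x -> z \in F y -> x = y) ->
  uniq (flatten [seq F x | x <- s]).
Proof.
move=> us uF dis; elim: s us => [|x s IH] //= /andP[xs us].
rewrite cat_uniq uF IH // andbT.
apply/hasP => -[z /flatten_mapP[y ys zy] zx].
by move: xs; rewrite (dis _ _ _ zx zy) ys.
Qed.

Lemma uniq_level d k : uniq (level d k).
Proof.
elim: k => [|k IH] //=.
apply: uniq_flatten_map => //.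
  by move=> u; rewrite map_inj_uniq ?iota_uniq // => a b /rcons_inj [].
by move=> x y z /mapP[a _ ->] /mapP[b _] /rcons_inj [].
Qed.

Lemma uniq_verts d h : uniq (verts d h).
Proof.
apply: uniq_flatten_map; first exact: iota_uniq.
  exact: uniq_level.
by move=> x y z; rewrite !mem_level => /andP[/eqP <- _] /andP[/eqP <- _].
Qed.

Local Open Scope ring_scope.

Lemma sum_pt (T : eqType) (s : seq T) x (F : T -> int) :
  uniq s -> x \in s -> \sum_(i <- s) F i * (i == x)%:Z = F x.
Proof.
move=> us xs.
rewrite (eq_bigr (fun i => if i == x then F i else 0)); last first.
  by move=> i _; case: (i == x); rewrite ?mulr1 ?mulr0.
by rewrite -big_mkcond -big_filter filter_pred1_uniq // big_seq1.
Qed.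

Local Close Scope ring_scope.


Definition cw (i w : seq nat) : bool := (size i == (size w).+1) && (take (size w) i == w).

Lemma cw_rcons_l u c i : cw (rcons u c) i = (i == u).
Proof.
rewrite /cw size_rcons eqSS.
have [E|ne] := eqVneq (size u) (size i).
  by rewrite -E -cats1 take_size_cat // eq_sym.
by rewrite /=; apply/esym/eqP => E; move: ne; rewrite E eqxx.
Qed.

Lemma cw_nil i : cw [::] i = false.
Proof. by []. Qed.

Lemma cwE i w : cw i w -> i = rcons w (nth 0 i (size w)).
Proof.
case/andP=> /eqP si /eqP ti.
by rewrite -{1}ti -take_nth ?si // -si take_size.
Qed.

Lemma cw_rcons w c : cw (rcons w c) w.
Proof. by rewrite /cw size_rcons eqxx /= -cats1 take_size_cat. Qed.

Local Open Scope ring_scope.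

Lemma Delta_sym d i w : Delta d i w = Delta d w i.
Proof. by rewrite /Delta /adj eq_sym orbC. Qed.

Lemma DeltaE d i w : Delta d i w = d%:Z * (i == w)%:Z - (cw w i)%:Z - (cw i w)%:Z.
Proof.
rewrite /Delta -addrA -opprD; congr (_ - _).
have -> : adj i w = cw w i || cw i w by [].
case A: (cw w i); case B: (cw i w) => //.
move: A B; rewrite /cw => /andP[/eqP A _] /andP[/eqP B _].
by move: A; rewrite B; lia.
Qed.

Lemma lap d h (phi : seq nat -> int) w : w \in verts d h ->
 \sum_(i <- verts d h) phi i * Delta d i w =
 d%:Z * phi w - (if size w is 0 then 0 else phi (take (size w).-1 w))
   - (if (size w < h)%N then \sum_(c <- iota 0 (nchildren d w)) phi (rcons w c) else 0).
Proof.
move=> wV.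
rewrite (eq_bigr (fun i => d%:Z * (phi i * (i == w)%:Z) - phi i * (cw w i)%:Z - phi i * (cw i w)%:Z)); last first.
  by move=> i _; rewrite DeltaE !mulrBr mulrCA.
rewrite !big_split /= -big_distrr /= sum_pt ?uniq_verts // !sumrN.
congr (_ - _ - _).
  case/lastP: w wV => [|u c] wV.
    by rewrite big1 // => i _; rewrite cw_nil mulr0.
  rewrite size_rcons /= -cats1 take_size_cat //.
  under eq_bigr do rewrite cats1 cw_rcons_l.
  rewrite sum_pt ?uniq_verts //.
  by move: wV; rewrite !mem_verts size_rcons okv_rcons => /andP[/ltnW -> /andP[->]].
rewrite (eq_bigr (fun i => if cw i w then phi i else 0)); last first.
  by move=> i _; case: (cw i w); rewrite ?mulr1 ?mulr0.
rewrite -big_mkcond -big_filter.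
have -> : (if (size w < h)%N then \sum_(c <- iota 0 (nchildren d w)) phi (rcons w c) else 0)
   = \sum_(i <- if (size w < h)%N then [seq rcons w c | c <- iota 0 (nchildren d w)] else [::]) phi i.
  by case: ifP => _; rewrite ?big_map ?big_nil.
apply: perm_big; apply: uniq_perm.
- by rewrite filter_uniq ?uniq_verts.
- by case: ifP => // _; rewrite map_inj_uniq ?iota_uniq // => a b /rcons_inj [].
move=> i; rewrite mem_filter.
move: wV; rewrite !mem_verts => /andP[sw ow].
apply/andP/idP.
  case=> /cwE ->.
  rewrite size_rcons okv_rcons ow /= => /andP[shw hc]; rewrite shw.
  by apply/mapP; eexists => //; rewrite mem_iota.
case: ifP => // shw /mapP[c]; rewrite mem_iota add0n => /andP[_ hc] ->.
rewrite size_rcons okv_rcons ow hc shw; split => //.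
exact: cw_rcons.
Qed.

Local Close Scope ring_scope.


Definition T (d t : nat) : nat := \sum_(i < t) (d.-1) ^ i.

Lemma T0 d : T d 0 = 0%N.
Proof. by rewrite /T big_ord0. Qed.

Lemma TS d t : T d t.+1 = (1 + d.-1 * T d t)%N.
Proof.
rewrite /T big_ord_recl expn0; congr (_ + _)%N.
by rewrite big_distrr /=; apply: eq_bigr => i _; rewrite expnS.
Qed.

Lemma theta_T d t : (3 <= d)%N -> theta d t = T d t.
Proof.
move=> d3.
have E : ((d - 2) * T d t = (d.-1 ^ t).-1)%N.
  elim: t => [|t IH]; first by rewrite T0 expn0 muln0.
  rewrite TS expnS.
  have : (0 < d.-1 ^ t)%N by rewrite expn_gt0; apply/orP; left; lia.
  move: IH; set x := (d.-1 ^ t)%N; set y := T d t => IH hx.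
  nia.
rewrite /theta -E mulKn //; lia.
Qed.

Local Open Scope ring_scope.

Lemma T_rec d t : (1 <= d)%N ->
  d%:Z * (T d t.+1)%:Z - (d.-1)%:Z * (T d t)%:Z = (T d t.+2)%:Z.
Proof.
move=> d1.
rewrite (TS d t.+1) (TS d t) !PoszD !PoszM.
have -> : d%:Z = (d.-1)%:Z + 1 by rewrite -PoszD addn1 prednK.
ring.
Qed.

Definition phi (d h n : nat) (g : seq nat -> int) (w : seq nat) : int :=
  if (n <= size w)%N then g (take n w) * (T d (h.+1 - size w))%:Z else 0.

Local Close Scope ring_scope.

Local Open Scope ring_scope.

Lemma lap_phi d h n g w : (1 <= d)%N -> (1 <= n <= h)%N -> w \in verts d h ->
 \sum_(i <- verts d h) phi d h n g i * Delta d i w =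
 (if size w == n then g w * (T d (h.+2 - n))%:Z else 0)
 - (if size w == n.-1 then (T d (h.+1 - n))%:Z * \sum_(c <- iota 0 (nchildren d w)) g (rcons w c) else 0).
Proof.
move=> d1 /andP[n1 nh] wV; rewrite lap //.
have sh : (size w <= h)%N by move: wV; rewrite mem_verts => /andP[].
have Hpar : (if size w is 0 then 0 else phi d h n g (take (size w).-1 w))
   = if (n < size w)%N then g (take n w) * (T d (h.+2 - size w))%:Z else 0.
  case/lastP: w wV sh => [|u c] wV sh; first by [].
  rewrite size_rcons /= -cats1 (take_size_cat _ (erefl (size u))) /phi ltnS.
  case: ifP => // hn; rewrite takel_cat //.
have Hch : (if (size w < h)%N then \sum_(c <- iota 0 (nchildren d w)) phi d h n g (rcons w c) else 0)
   = if (n <= size w)%N then (d.-1)%:Z * (g (take n w) * (T d (h - size w))%:Z)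
     else if (size w).+1 == n then (T d (h.+1 - n))%:Z * \sum_(c <- iota 0 (nchildren d w)) g (rcons w c)
     else 0.
  case: ltnP => hs.
  - case: ifP => hn.
      have -> : nchildren d w = d.-1 by case: w {wV sh hs Hpar} hn => //=; rewrite leqn0 => /eqP n0; move: n1; rewrite n0.
      rewrite (eq_bigr (fun _ => g (take n w) * (T d (h - size w))%:Z)); last first.
        by move=> c _; rewrite /phi size_rcons (leq_trans hn (leqnSn _)) -cats1 takel_cat // subSS.
      by rewrite big_const_seq count_predT size_iota iter_addr_0 -mulr_natl natz.
    case: ifP => hn2.
      rewrite mulr_sumr; apply: eq_bigr => c _.
      by rewrite /phi size_rcons -(eqP hn2) leqnn take_oversize ?size_rcons // subSS mulrC.
    rewrite big1 // => c _; rewrite /phi size_rcons ifN //; by rewrite -ltnNge ltn_neqAle hn2 /= ltnNge hn.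
  - have -> : size w = h by apply/eqP; rewrite eqn_leq sh hs.
    by rewrite nh subnn T0 !mulr0.
rewrite Hpar Hch /phi.
case: (ltngtP n (size w)) => hn.
- rewrite ifN; last by rewrite neq_ltn; apply/orP; right; lia.
  have -> : (h.+1 - size w = (h - size w).+1)%N by lia.
  have -> : (h.+2 - size w = (h - size w).+2)%N by lia.
  rewrite -(T_rec _ d1); ring.
- have -> : (size w == n.-1) = ((size w).+1 == n) by lia.
  by rewrite mulr0 !subr0 sub0r.
- subst n; rewrite take_size ifN; last by rewrite neq_ltn; apply/orP; right; lia.
  have -> : (h.+1 - size w = (h - size w).+1)%N by lia.
  have -> : (h.+2 - size w = (h - size w).+2)%N by lia.
  rewrite -(T_rec _ d1); ring.
Qed.

Local Close Scope ring_scope.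

Local Open Scope ring_scope.

Lemma nch_size d u v : size u = size v -> nchildren d u = nchildren d v.
Proof. by case: u; case: v. Qed.

Theorem proposition8p10 (d h n : nat) (j : seq nat) :
  (3 <= d)%N -> (1 <= h)%N -> (1 <= n <= h)%N ->
  j \in verts d h -> depth j = n ->
  quot_order d h n j (theta d (h + 2 - n)).
Proof.
move=> d3 h1 /andP[n1 nh] jV dj.
have d1 : (1 <= d)%N by lia.
have nh' : (1 <= n <= h)%N by rewrite n1 nh.
rewrite /depth in dj.
rewrite theta_T // addn2.
set Th := T d (h.+2 - n).
set T' := T d (h.+1 - n).
have ThE : Th = (1 + d.-1 * T')%N by rewrite /Th /T' -TS; congr T; lia.
case/lastP: j jV dj => [|pj l] jV dj; first by move: n1; rewrite -dj.
move: (jV); rewrite mem_verts okv_rcons size_rcons => /andP[spj /andP[opj hl]].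
have spj' : size pj = n.-1 by rewrite -dj size_rcons.
have pjV : pj \in verts d h by rewrite mem_verts opj andbT; lia.
split; first by rewrite ThE.
split.
  exists (phi d h n (fun u => (u == rcons pj l)%:Z)), (fun i => T'%:Z * (i == pj)%:Z).
  move=> w wV.
  have -> : \sum_(i <- verts d h | (depth i <= n.-1)%N) T'%:Z * (i == pj)%:Z * (i == w)%:Z = T'%:Z * (pj == w)%:Z.
    rewrite -big_filter.
    rewrite (eq_bigr (fun i => (T'%:Z * (i == w)%:Z) * (i == pj)%:Z)); last first.
      by move=> i _; rewrite mulrAC.
    by rewrite sum_pt ?filter_uniq ?uniq_verts // mem_filter pjV /depth spj' leqnn.
  rewrite lap_phi // -/Th -/T'.
  rewrite /xscaled.
  have [sw|sw] := eqVneq (size w) n.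
    rewrite ifN; last by rewrite sw; lia.
    have -> : (pj == w) = false by apply/negbTE; apply/eqP => E; move: sw; rewrite -E spj'; lia.
    rewrite mulr0 subr0 addr0 mulrC; congr (_ * _).
  rewrite sub0r.
  have -> : (w == rcons pj l) = false by apply/negbTE; apply/eqP => E; move: sw; rewrite E dj eqxx.
  have [sw'|sw'] := eqVneq (size w) n.-1.
    rewrite (eq_bigr (fun c => (w == pj)%:Z * (c == l)%:Z)); last first.
      by move=> c _; rewrite eqseq_rcons; case: (w == pj); case: (c == l).
    rewrite sum_pt ?iota_uniq; last by rewrite mem_iota add0n (nch_size d (etrans sw' (esym spj'))).
    by rewrite eq_sym mulr0 addNr.
    by [].
  have -> : (pj == w) = false by apply/negbTE; apply/eqP => E; move: sw'; rewrite -E spj' eqxx.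
  by rewrite !mulr0 oppr0 addr0.
move=> k' /andP[k0 kT] [c [e H]].
pose l' := if l == 0%N then 1%N else 0%N.
have ll' : l != l' by rewrite /l'; case: (l) .
pose g (u : seq nat) := ((nth 0%N u n.-1 == l)%:Z - (nth 0%N u n.-1 == l')%:Z).
pose ph := phi d h n g.
have key : forall i, i \in verts d h ->
    \sum_(w <- verts d h) ph w * Delta d i w = if size i == n then g i * Th%:Z else 0.
  move=> i iV.
  under eq_bigr do rewrite Delta_sym.
  rewrite lap_phi // -/Th -/T'.
  case: (eqVneq (size i) n.-1) => si; last by rewrite subr0.
  have hN : (2 <= nchildren d i)%N by rewrite /nchildren; case: (i); lia.
  rewrite (eq_bigr (fun c => (1 * (c == l)%:Z) - (1 * (c == l')%:Z))); last first.
    by move=> x _; rewrite /g nth_rcons si ltnn eqxx !mul1r.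
  rewrite sumrB !sum_pt ?iota_uniq ?subrr ?mulr0 ?subr0 //.
  - by rewrite mem_iota add0n /l'; case: (l) => [|x] /=; lia.
  - by rewrite mem_iota add0n (nch_size d (etrans si (esym spj'))).
have S1 : \sum_(w <- verts d h) ph w * xscaled k' (rcons pj l) w = k'%:Z * T'%:Z.
  rewrite (eq_bigr (fun w => (k'%:Z * ph w) * (w == rcons pj l)%:Z)); last first.
    by move=> w _; rewrite /xscaled mulrCA mulrA.
  rewrite sum_pt ?uniq_verts //.
  rewrite /ph /phi dj leqnn take_oversize ?dj // /g nth_rcons spj' ltnn eqxx (negbTE ll') -/T'.
  by rewrite eqxx subr0 mul1r.
have S2 : \sum_(w <- verts d h) ph w * xscaled k' (rcons pj l) w
    = Th%:Z * \sum_(i <- verts d h) c i * (if size i == n then g i else 0).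
  rewrite (eq_big_seq (fun w => ph w * (\sum_(i <- verts d h) c i * Delta d i w) + ph w * \sum_(i <- verts d h | (depth i <= n.-1)%N) e i * (i == w)%:Z)); last first.
    by move=> w wV; rewrite H // mulrDr.
  rewrite big_split /=.
  rewrite [X in _ + X]big1 ?addr0; last first.
    move=> w _; rewrite mulr_sumr big1 // => i hi.
    case: (eqVneq i w) => [<-|]; last by rewrite !mulr0.
    rewrite /ph /phi ifN ?mul0r //; rewrite /depth in hi; lia.
  under eq_bigr do rewrite mulr_sumr.
  rewrite exchange_big /= mulr_sumr; apply: eq_big_seq => i iV.
  rewrite (eq_bigr (fun w => c i * (ph w * Delta d i w))); last by move=> w _; rewrite mulrCA.
  rewrite -mulr_sumr key //; case: ifP => _; first by rewrite [RHS]mulrC mulrA.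
  by rewrite !mulr0.
have [Z E] : exists Z : int, (k' * T')%N = (Th * `|Z|)%N.
  by eexists; have := congr1 absz (etrans (esym S1) S2); rewrite !abszM; apply.
have dv : (Th %| k' * T')%N by rewrite E dvdn_mulr.
have : (Th %| d.-1 * (k' * T') + k')%N.
  have -> : (d.-1 * (k' * T') + k' = k' * Th)%N by rewrite ThE; lia.
  exact: dvdn_mull.
rewrite dvdn_addr; last exact: dvdn_mull.
move/(dvdn_leq k0); lia.
Qed.
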